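(* Let $X$ be a special (abstract) rank one group with abelian unipotent subgroups $A$ and $B$, and set $H = N_X(A) \cap N_X(B)$. Then for all $1 \neq a_1, a_2 \in A$ with $a_1 a_2 \neq 1$ we have $a_1 \in a_2 [A,H]$.
   Context: For a group $X$ and $g,x \in X$, write $x^g = g^{-1}xg$, $A^g = g^{-1}Ag$, and $[x,g] = x^{-1}g^{-1}xg$; $[A,H]$ denotes the subgroup generated by all $[a,h]$ with $a \in A$, $h \in H$. A group $X$ is an (abstract) rank one group with abelian unipotent subgroups $A$ and $B$ if $X = \langle A, B\rangle$ where $A$ and $B$ are different abelian subgroups of $X$ such that for each $1 \neq a \in A$ there is an element $1 \neq b \in B$ with $A^b = B^a$, and for each $1 \neq b \in B$ there is an element $1 \neq a \in A$ with $B^a = A^b$. In such a group, for each $1 \neq a \in A$ the element $1 \neq b \in B$ with $A^b = B^a$ is uniquely determined and is denoted $b(a)$. The group $X$ is called special if $b(a^{-1}) = b(a)^{-1}$ for all $1 \neq a \in A$. *)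

(* Defs.v *)
Record Group := {
  gcar :> Type;
  gmul : gcar -> gcar -> gcar;
  ginv : gcar -> gcar;
  gone : gcar;
  gmulA : forall x y z, gmul x (gmul y z) = gmul (gmul x y) z;
  gmul1l : forall x, gmul gone x = x;
  gmulVl : forall x, gmul (ginv x) x = gone
}.

Arguments gmul {g}.
Arguments ginv {g}.
Arguments gone {g}.

Section Defs.
Variable X : Group.

Definition subset := X -> Prop.

Definition seteq (S T : subset) : Prop := forall x, S x <-> T x.

Definition is_subgroup (S : subset) : Prop :=
  S gone /\ (forall x y, S x -> S y -> S (gmul x y)) /\ (forall x, S x -> S (ginv x)).

Definition is_abelian_subgroup (S : subset) : Prop :=
  is_subgroup S /\ forall x y, S x -> S y -> gmul x y = gmul y x.

Definition conj (x g : X) : X := gmul (ginv g) (gmul x g).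

Definition conjset (S : subset) (g : X) : subset :=
  fun y => exists a, S a /\ y = conj a g.

Definition comm (x g : X) : X := gmul (ginv x) (gmul (ginv g) (gmul x g)).

Inductive gen (S : subset) : subset :=
  | gen_mem : forall x, S x -> gen S x
  | gen_one : gen S gone
  | gen_mul : forall x y, gen S x -> gen S y -> gen S (gmul x y)
  | gen_inv : forall x, gen S x -> gen S (ginv x).

Definition commset (S T : subset) : subset :=
  gen (fun z => exists a h, S a /\ T h /\ z = comm a h).

Definition normalizer (S : subset) : subset := fun g => seteq (conjset S g) S.

Definition rank_one (A B : subset) : Prop :=
  is_abelian_subgroup A /\ is_abelian_subgroup B /\
  ~ seteq A B /\
  (forall x : X, gen (fun y => A y \/ B y) x) /\
  (forall a, A a -> a <> gone ->
     exists b, B b /\ b <> gone /\ seteq (conjset A b) (conjset B a)) /\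
  (forall b, B b -> b <> gone ->
     exists a, A a /\ a <> gone /\ seteq (conjset B a) (conjset A b)).

(* "b = b(a)": b is the (unique) element 1 <> b in B with A^b = B^a *)
Definition is_b (A B : subset) (a b : X) : Prop :=
  B b /\ b <> gone /\ seteq (conjset A b) (conjset B a).

Definition special (A B : subset) : Prop :=
  forall a b, A a -> a <> gone -> is_b A B a b -> is_b A B (ginv a) (ginv b).

End Defs.

(* Main.v *)
Require Import Defs.
From Stdlib Require Import FunctionalExtensionality PropExtensionality Classical.

Lemma g_mulVr (X : Group) (x : X) : gmul x (ginv x) = gone.
Proof.
  rewrite <- (gmul1l X (gmul x (ginv x))).
  rewrite <- (gmulVl X (ginv x)) at 1.
  rewrite <- gmulA, (gmulA X (ginv x)), gmulVl, gmul1l.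
  apply gmulVl.
Qed.

Lemma g_mul1r (X : Group) (x : X) : gmul x gone = x.
Proof. rewrite <- (gmulVl X x), gmulA, g_mulVr, gmul1l. reflexivity. Qed.

Lemma g_inv_uniq (X : Group) (x y : X) : gmul x y = gone -> ginv x = y.
Proof.
  intro H. rewrite <- (g_mul1r X (ginv x)), <- H, gmulA, gmulVl, gmul1l.
  reflexivity.
Qed.

Lemma g_invK (X : Group) (x : X) : ginv (ginv x) = x.
Proof. apply g_inv_uniq, gmulVl. Qed.

Lemma g_invM (X : Group) (x y : X) : ginv (gmul x y) = gmul (ginv y) (ginv x).
Proof.
  apply g_inv_uniq. rewrite gmulA, <- (gmulA X x), g_mulVr, g_mul1r, g_mulVr.
  reflexivity.
Qed.

Lemma g_inv1 (X : Group) : ginv (@gone X) = gone.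
Proof. apply g_inv_uniq, gmul1l. Qed.

Lemma g_mulKl (X : Group) (x y : X) : gmul (ginv x) (gmul x y) = y.
Proof. rewrite gmulA, gmulVl, gmul1l. reflexivity. Qed.

Lemma g_mulKr (X : Group) (x y : X) : gmul x (gmul (ginv x) y) = y.
Proof. rewrite gmulA, g_mulVr, gmul1l. reflexivity. Qed.

Lemma seteq_eq (X : Group) (S T : subset X) : seteq X S T -> S = T.
Proof.
  intro H. apply functional_extensionality; intro x.
  apply propositional_extensionality, H.
Qed.

Lemma conj_mul (X : Group) (a g h : X) : conj X a (gmul g h) = conj X (conj X a g) h.
Proof.
  unfold conj. rewrite g_invM. rewrite !gmulA. reflexivity.
Qed.

Lemma conj_one (X : Group) (a : X) : conj X a gone = a.
Proof. unfold conj. rewrite g_inv1, gmul1l, g_mul1r. reflexivity. Qed.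

Lemma conj_K (X : Group) (a g : X) : conj X (conj X a g) (ginv g) = a.
Proof. rewrite <- conj_mul, g_mulVr, conj_one. reflexivity. Qed.

Lemma conj_Kv (X : Group) (a g : X) : conj X (conj X a (ginv g)) g = a.
Proof. rewrite <- (g_invK X g) at 2. apply conj_K. Qed.

Lemma cs_mul (X : Group) (S : subset X) (g h : X) :
  conjset X (conjset X S g) h = conjset X S (gmul g h).
Proof.
  apply seteq_eq; intro y; split.
  - intros [z [[a [Ha ->]] ->]]. exists a. split; auto. rewrite conj_mul. reflexivity.
  - intros [a [Ha ->]]. exists (conj X a g). split.
    + exists a; auto.
    + apply conj_mul.
Qed.

Lemma cs_one (X : Group) (S : subset X) : conjset X S gone = S.
Proof.
  apply seteq_eq; intro y; split.
  - intros [a [Ha ->]]. rewrite conj_one. exact Ha.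
  - intro Hy. exists y. rewrite conj_one. auto.
Qed.

Lemma cs_sub (X : Group) (S : subset X) (g : X) :
  is_subgroup X S -> S g -> conjset X S g = S.
Proof.
  intros [H1 [HM HI]] Hg. apply seteq_eq; intro y; split.
  - intros [a [Ha ->]]. unfold conj. apply HM; auto.
  - intro Hy. exists (conj X y (ginv g)). split.
    + unfold conj. apply HM; [rewrite g_invK; auto|]. apply HM; auto.
    + rewrite conj_Kv. reflexivity.
Qed.

Lemma cs_mem (X : Group) (S : subset X) (g a : X) : S a -> conjset X S g (conj X a g).
Proof. intro H. exists a. auto. Qed.

Definition nu1 (X : Group) (a b : X) : X := gmul (gmul a (ginv b)) a.
Definition nu2 (X : Group) (b a : X) : X := gmul (gmul (ginv b) a) (ginv b).

Lemma sub_inv (X : Group) (S : subset X) x : is_subgroup X S -> S x -> S (ginv x).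
Proof. intros [_ [_ H]]; auto. Qed.

Lemma swap1 (X : Group) (A B : subset X) a b :
  is_subgroup X A -> is_subgroup X B -> A a -> B b ->
  conjset X A b = conjset X B a -> conjset X A (ginv b) = conjset X B (ginv a) ->
  conjset X A (nu1 X a b) = B /\ conjset X B (nu1 X a b) = A.
Proof.
  intros SA SB Ha Hb E E'. unfold nu1. split.
  - rewrite <- !cs_mul, (cs_sub X A a SA Ha), E', cs_mul, gmulVl, cs_one. reflexivity.
  - rewrite <- !cs_mul, <- E, (cs_mul X A b), g_mulVr, cs_one, (cs_sub X A a SA Ha). reflexivity.
Qed.

Lemma swap2 (X : Group) (A B : subset X) a b :
  is_subgroup X A -> is_subgroup X B -> A a -> B b ->
  conjset X A b = conjset X B a -> conjset X A (ginv b) = conjset X B (ginv a) ->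
  conjset X A (nu2 X b a) = B /\ conjset X B (nu2 X b a) = A.
Proof.
  intros SA SB Ha Hb E E'. unfold nu2. split.
  - rewrite <- !cs_mul, E', (cs_mul X B (ginv a)), gmulVl, cs_one.
    apply cs_sub; auto. apply sub_inv; auto.
  - rewrite <- !cs_mul, (cs_sub X B (ginv b) SB (sub_inv X B b SB Hb)),
      <- E, (cs_mul X A b), g_mulVr, cs_one. reflexivity.
Qed.

Lemma key (X : Group) (A B : subset X) a3 b3 ai bi aj bj :
  is_subgroup X A -> is_subgroup X B -> A a3 -> B b3 -> A ai -> B bi ->
  conjset X A b3 = conjset X B a3 -> conjset X A (ginv b3) = conjset X B (ginv a3) ->
  conjset X A bi = conjset X B ai -> conjset X A (ginv bi) = conjset X B (ginv ai) ->
  conjset X A (ginv bj) = conjset X B (ginv aj) ->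
  gmul (ginv a3) ai = ginv aj ->
  let h := gmul (nu2 X b3 a3) (nu1 X ai bi) in
  conjset X A h = A /\ conjset X B h = B /\
  conjset X B (gmul (conj X a3 h) (ginv ai)) = conjset X A (gmul (ginv bj) (ginv bi)).
Proof.
  intros SA SB Ha3 Hb3 Hai Hbi E3 E3' Ei Ei' Ej' rel h.
  destruct (swap1 X A B ai bi SA SB Hai Hbi Ei Ei') as [S1A S1B].
  destruct (swap2 X A B a3 b3 SA SB Ha3 Hb3 E3 E3') as [S2A S2B].
  assert (HA : conjset X A h = A) by (unfold h; rewrite <- cs_mul, S2A, S1B; reflexivity).
  assert (HB : conjset X B h = B) by (unfold h; rewrite <- cs_mul, S2B, S1A; reflexivity).
  assert (HB' : conjset X B (ginv h) = B).
  { rewrite <- HB at 1. rewrite cs_mul, g_mulVr, cs_one. reflexivity. }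
  split; [exact HA|]. split; [exact HB|].
  unfold conj. rewrite <- (cs_mul X B (gmul (ginv h) (gmul a3 h))), <- cs_mul, HB'.
  rewrite <- cs_mul, <- E3, !cs_mul.
  assert (Eq : gmul b3 (gmul h (ginv ai)) = gmul (gmul (gmul a3 (ginv b3)) ai) (ginv bi)).
  { unfold h, nu1, nu2. rewrite !gmulA, g_mulVr, gmul1l.
    rewrite <- (gmulA X _ ai (ginv ai)), g_mulVr, g_mul1r. reflexivity. }
  rewrite Eq, <- !cs_mul, (cs_sub X A a3 SA Ha3), E3', (cs_mul X B (ginv a3)), rel, Ej'.
  reflexivity.
Qed.

Lemma mul_eq1 (X : Group) (x y : X) : gmul x (ginv y) = gone -> x = y.
Proof.
  intro H. rewrite <- (g_mul1r X x), <- (gmulVl X y), gmulA, H, gmul1l. reflexivity.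
Qed.

Lemma sub_mul (X : Group) (S : subset X) x y : is_subgroup X S -> S x -> S y -> S (gmul x y).
Proof. intros [_ [H _]]; auto. Qed.

Theorem lemma2p2 (X : Group) (A B : subset X) :
  rank_one X A B -> special X A B ->
  let H : subset X := fun g => normalizer X A g /\ normalizer X B g in
  forall a1 a2 : X, A a1 -> A a2 -> a1 <> gone -> a2 <> gone ->
    gmul a1 a2 <> gone ->
    exists c, commset X A H c /\ a1 = gmul a2 c.
Proof.
  intros RO SP H a1 a2 Ha1 Ha2 n1 n2 n3.
  destruct RO as [[SA cA] [[SB cB] [nAB [_ [exA _]]]]].
  assert (NAB : forall z, A z -> conjset X B z = B -> z = gone).
  { intros z Hz Ez. apply NNPP; intro nz.
    destruct (exA z Hz nz) as [b [Hb [_ Eb]]].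
    apply seteq_eq in Eb. rewrite Ez in Eb.
    apply nAB. intro x.
    assert (E : A = B).
    { rewrite <- (cs_one X A), <- (g_mulVr X b), <- cs_mul, Eb.
      apply cs_sub; auto. apply sub_inv; auto. }
    rewrite E; tauto. }
  assert (getb : forall a, A a -> a <> gone -> exists b, B b /\
             conjset X A b = conjset X B a /\ conjset X A (ginv b) = conjset X B (ginv a)).
  { intros a Ha na. destruct (exA a Ha na) as [b [Hb [nb Eb]]].
    destruct (SP a b Ha na ltac:(split; [exact Hb | split; [exact nb | exact Eb]])) as [_ [_ Eb']].
    exists b. split; [auto|]. split; apply seteq_eq; auto. }
  set (a3 := gmul a1 a2).
  assert (Ha3 : A a3) by (apply sub_mul; auto).
  destruct (getb a1 Ha1 n1) as [b1 [Hb1 [E1 E1']]].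
  destruct (getb a2 Ha2 n2) as [b2 [Hb2 [E2 E2']]].
  destruct (getb a3 Ha3 n3) as [b3 [Hb3 [E3 E3']]].
  assert (rel1 : gmul (ginv a3) a1 = ginv a2).
  { unfold a3. rewrite g_invM, <- gmulA, gmulVl, g_mul1r. reflexivity. }
  assert (rel2 : gmul (ginv a3) a2 = ginv a1).
  { unfold a3. rewrite (cA a1 a2 Ha1 Ha2), g_invM, <- gmulA, gmulVl, g_mul1r. reflexivity. }
  destruct (key X A B a3 b3 a1 b1 a2 b2 SA SB Ha3 Hb3 Ha1 Hb1 E3 E3' E1 E1' E2' rel1)
    as [HA1 [HB1 K1]].
  destruct (key X A B a3 b3 a2 b2 a1 b1 SA SB Ha3 Hb3 Ha2 Hb2 E3 E3' E2 E2' E1' rel2)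
    as [HA2 [HB2 K2]].
  set (h1 := gmul (nu2 X b3 a3) (nu1 X a1 b1)) in *.
  set (h2 := gmul (nu2 X b3 a3) (nu1 X a2 b2)) in *.
  set (w1 := conj X a3 h1) in *.
  set (w2 := conj X a3 h2) in *.
  assert (Hw1 : A w1) by (unfold w1; rewrite <- HA1; apply cs_mem; auto).
  assert (Hw2 : A w2) by (unfold w2; rewrite <- HA2; apply cs_mem; auto).
  set (s1 := gmul w1 (ginv a1)) in *.
  set (s2 := gmul w2 (ginv a2)) in *.
  assert (Hs1 : A s1) by (apply sub_mul; auto; apply sub_inv; auto).
  assert (Hs2 : A s2) by (apply sub_mul; auto; apply sub_inv; auto).
  assert (Es : s1 = s2).
  { apply mul_eq1, NAB.
    - apply sub_mul; auto; apply sub_inv; auto.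
    - rewrite <- cs_mul, K1, (cB (ginv b2) (ginv b1)), <- K2, cs_mul, g_mulVr, cs_one.
      + reflexivity.
      + apply sub_inv; auto.
      + apply sub_inv; auto. }
  assert (Ew1 : w1 = gmul s1 a1) by (unfold s1; rewrite <- gmulA, gmulVl, g_mul1r; reflexivity).
  assert (Ew2 : w2 = gmul s1 a2) by (rewrite Es; unfold s2; rewrite <- gmulA, gmulVl, g_mul1r; reflexivity).
  exists (gmul (comm X a3 h1) (ginv (comm X a3 h2))). split.
  - apply gen_mul; [|apply gen_inv]; apply gen_mem.
    + exists a3, h1. split; [auto|]. split; [|reflexivity].
      split; intro y; [rewrite HA1 | rewrite HB1]; tauto.
    + exists a3, h2. split; [auto|]. split; [|reflexivity].
      split; intro y; [rewrite HA2 | rewrite HB2]; tauto.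
  - change (comm X a3 h1) with (gmul (ginv a3) w1).
    change (comm X a3 h2) with (gmul (ginv a3) w2).
    assert (Hd : gmul w1 (ginv w2) = gmul a1 (ginv a2)).
    { rewrite Ew1, Ew2, g_invM, <- gmulA, (gmulA X a1), (gmulA X s1), (cA s1 (gmul a1 (ginv a2))).
      - rewrite <- gmulA, g_mulVr, g_mul1r. reflexivity.
      - exact Hs1.
      - apply sub_mul; auto; apply sub_inv; auto. }
    rewrite g_invM, g_invK, <- gmulA, (gmulA X w1), Hd.
    rewrite (cA (gmul a1 (ginv a2)) a3), g_mulKl.
    + rewrite (cA a1 (ginv a2)), g_mulKr; auto. apply sub_inv; auto.
    + apply sub_mul; auto; apply sub_inv; auto.
    + exact Ha3.
Qed.
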